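(* Let $m,n\ge 1$ and let $P=\mathbb{R}^{m\times n}$ be the space of real $m\times n$ arrays $z=(z_{ij})$, with the group $\Gamma=\mathbf{S}_m\times\mathbf{S}_n$ acting by $((\sigma,\tau)z)_{ij}=z_{\sigma^{-1}(i)\,\tau^{-1}(j)}$. Then a linear map $L:P\to P$ commutes with the action of $\Gamma$ (i.e. $L(\gamma z)=\gamma L(z)$ for all $\gamma\in\Gamma$, $z\in P$) if and only if $L$ is a linear admissible map for the influence network $\mathcal{N}_{mn}$, i.e. if and only if there exist real constants $\alpha,\beta,\gamma,\delta$ such that for all $i,j$ $$L(z)_{ij}=\alpha z_{ij}+\beta\sum_{l\ne j}z_{il}+\gamma\sum_{k\ne i}z_{kj}+\delta\sum_{k\ne i,\,l\ne j}z_{kl}.$$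
   Context: The influence network $\mathcal{N}_{mn}$ has node set $\{(i,j):1\le i\le m,\ 1\le j\le n\}$, all nodes of one type, and three arrow types into each node $(i,j)$: row arrows from the nodes in $A_{ij}=\{(i,l):l\ne j\}$, column arrows from $O_{ij}=\{(k,j):k\ne i\}$, and diagonal arrows from $E_{ij}=\{(k,l):k\ne i,\ l\ne j\}$. A map $G:P\to P$ is admissible for $\mathcal{N}_{mn}$ if there is a single function $g$, independent of $(i,j)$, with $G_{ij}(z)=g(z_{ij},z_{A_{ij}},z_{O_{ij}},z_{E_{ij}})$, where $g$ is invariant under all permutations of the arguments within each of the three groups $z_{A_{ij}}$, $z_{O_{ij}}$, $z_{E_{ij}}$. Linear admissible maps are exactly those of the displayed form. *)

(* Defs.v *)
From HB Require Import structures.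
From mathcomp Require Import all_boot all_order all_algebra all_fingroup.
Set Implicit Arguments. Unset Strict Implicit. Unset Printing Implicit Defensive.
Import Order.TTheory GRing.Theory Num.Theory.
Local Open Scope ring_scope.

Definition gact (R : Type) (m n : nat) (s : 'S_m) (t : 'S_n)
  (z : 'M[R]_(m, n)) : 'M[R]_(m, n) :=
  \matrix_(i < m, j < n) z ((s^-1)%g i) ((t^-1)%g j).

Definition Gamma_equivariant (R : Type) (m n : nat)
  (L : 'M[R]_(m, n) -> 'M[R]_(m, n)) : Prop :=
  forall (s : 'S_m) (t : 'S_n) (z : 'M[R]_(m, n)),
    L (gact s t z) = gact s t (L z).

(* Linear admissible maps for the influence network N_mn
   (the displayed form: self, row arrows A_ij, column arrows O_ij,
   diagonal arrows E_ij). *)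
Definition linear_admissible_Nmn (R : ringType) (m n : nat)
  (L : 'M[R]_(m, n) -> 'M[R]_(m, n)) : Prop :=
  exists (a b c d : R), forall (z : 'M[R]_(m, n)) (i : 'I_m) (j : 'I_n),
    L z i j = a * z i j
            + b * (\sum_(l < n | l != j) z i l)
            + c * (\sum_(k < m | k != i) z k j)
            + d * (\sum_(k < m | k != i) \sum_(l < n | l != j) z k l).

(* Main.v *)
Require Import Defs.
From HB Require Import structures.
From mathcomp Require Import all_boot all_order all_algebra all_fingroup.
Local Open Scope ring_scope.
Import GRing.Theory.

Lemma perm_pair (T : finType) (k i k' i' : T) :
  (k == i) = (k' == i') -> exists s : {perm T}, s k = k' /\ s i = i'.
Proof.
case: (eqVneq k i) => [<-|ne].
  move=> /esym/eqP <-; exists (tperm k k'); by rewrite tpermL.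
move=> /esym/negbT ne'.
exists (tperm k k' * tperm (tperm k k' i) i')%g; rewrite !permM tpermL.
split; last by rewrite tpermL.
apply: tpermD => //.
by rewrite -[k' in _ != k'](tpermL k k') (inj_eq (@perm_inj _ _)) eq_sym.
by rewrite eq_sym.
Qed.

Lemma Defs_gact_delta (R : ringType) m n (s : 'S_m) (t : 'S_n) k l :
  Defs.gact s t (delta_mx k l : 'M[R]_(m, n)) = delta_mx (s k) (t l).
Proof.
apply/matrixP => i j; rewrite /Defs.gact !mxE.
by rewrite -{2}(permKV s i) -{2}(permKV t j) !(inj_eq (@perm_inj _ _)).
Qed.

Theorem theorem4p2 (R : realFieldType) (m n : nat) (hm : (0 < m)%N) (hn : (0 < n)%N)
  (L : {linear 'M[R]_(m, n) -> 'M[R]_(m, n)}) :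
  Gamma_equivariant L <-> linear_admissible_Nmn L.
Proof.
split.
- move=> eqL.
  pose K k l i j := L (delta_mx k l) i j.
  have Kp : forall (s : 'S_m) (t : 'S_n) k l i j,
      K (s k) (t l) (s i) (t j) = K k l i j.
    move=> s t k l i j; rewrite /K -Defs_gact_delta eqL /Defs.gact mxE.
    by rewrite !permK.
  have Kinv : forall k l i j k' l' i' j', (k == i) = (k' == i') ->
      (l == j) = (l' == j') -> K k l i j = K k' l' i' j'.
    move=> k l i j k' l' i' j' /perm_pair [s [<- <-]] /perm_pair [t [<- <-]].
    by rewrite Kp.
  have decomp : forall z i j,
      L z i j = \sum_k \sum_l z k l * K k l i j.
    move=> z i j; rewrite {1}(matrix_sum_delta z) linear_sum summxE.
    apply: eq_bigr => k _; rewrite linear_sum summxE.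
    by apply: eq_bigr => l _; rewrite linearZ mxE.
  pose i0 : 'I_m := Ordinal hm. pose j0 : 'I_n := Ordinal hn.
  pose ko := [pick k | k != i0]. pose lo := [pick l | l != j0].
  exists (K i0 j0 i0 j0).
  exists (if lo is Some l then K i0 l i0 j0 else 0).
  exists (if ko is Some k then K k j0 i0 j0 else 0).
  exists (if ko is Some k then if lo is Some l then K k l i0 j0 else 0 else 0).
  have Hk : forall k i : 'I_m, k != i -> exists k1, ko = Some k1 /\ k1 != i0.
    move=> k i ki; rewrite /ko; case: pickP => [k1 k1i|H]; first by exists k1.
    move: (H k) (H i) => /= /negbFE/eqP e1 /negbFE/eqP e2.
    by rewrite e1 e2 eqxx in ki.
  have Hl : forall l j : 'I_n, l != j -> exists l1, lo = Some l1 /\ l1 != j0.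
    move=> l j lj; rewrite /lo; case: pickP => [l1 l1j|H]; first by exists l1.
    move: (H l) (H j) => /= /negbFE/eqP e1 /negbFE/eqP e2.
    by rewrite e1 e2 eqxx in lj.
  move=> z i j; rewrite decomp (bigD1 i) //= (bigD1 j) //=.
  have -> : \sum_(k < m | k != i) \sum_(l < n) z k l * K k l i j =
    \sum_(k < m | k != i) (z k j * K k j i j + \sum_(l < n | l != j) z k l * K k l i j).
    by apply: eq_bigr => k _; rewrite (bigD1 j).
  rewrite big_split /= -!addrA; congr (_ + _).
    by rewrite mulrC; congr (_ * _); apply: Kinv; rewrite !eqxx.
  rewrite !addrA; congr (_ + _); last first.
    rewrite mulr_sumr; apply: eq_bigr => k ki; rewrite mulr_sumr.
    apply: eq_bigr => l lj; rewrite mulrC; congr (_ * _).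
    have [k1 [-> k1i]] := Hk _ _ ki; have [l1 [-> l1j]] := Hl _ _ lj.
    by apply: Kinv; rewrite ?(negbTE ki) ?(negbTE lj) ?(negbTE k1i) ?(negbTE l1j).
  congr (_ + _).
    rewrite mulr_sumr; apply: eq_bigr => l lj; rewrite mulrC; congr (_ * _).
    have [l1 [-> l1j]] := Hl _ _ lj.
    by apply: Kinv; rewrite ?eqxx ?(negbTE lj) ?(negbTE l1j).
  rewrite mulr_sumr; apply: eq_bigr => k ki; rewrite mulrC; congr (_ * _).
  have [k1 [-> k1i]] := Hk _ _ ki.
  by apply: Kinv; rewrite ?eqxx ?(negbTE ki) ?(negbTE k1i).
- move=> [a [b [c [d H]]]] s t z; apply/matrixP => i j.
  rewrite H [in RHS]/Defs.gact mxE H.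
  have rl : forall (f : 'I_n -> R) j, \sum_(l < n | l != j) f ((t^-1)%g l)
            = \sum_(l < n | l != (t^-1)%g j) f l.
    move=> f j'; rewrite (reindex_inj (@perm_inj _ t)) /=.
    apply: eq_big => [l|l _]; last by rewrite permK.
    by rewrite -(inj_eq (@perm_inj _ (t^-1)%g)) permK.
  have rk : forall (f : 'I_m -> R) i, \sum_(k < m | k != i) f ((s^-1)%g k)
            = \sum_(k < m | k != (s^-1)%g i) f k.
    move=> f i'; rewrite (reindex_inj (@perm_inj _ s)) /=.
    apply: eq_big => [k|k _]; last by rewrite permK.
    by rewrite -(inj_eq (@perm_inj _ (s^-1)%g)) permK.
  pose Z := Defs.gact s t z.
  have e1 : \sum_(l < n | l != j) Z i l = \sum_(l < n | l != (t^-1)%g j) z ((s^-1)%g i) l.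
    by rewrite -rl; apply: eq_bigr => l _; rewrite mxE.
  have e2 : \sum_(k < m | k != i) Z k j = \sum_(k < m | k != (s^-1)%g i) z k ((t^-1)%g j).
    by rewrite -(rk (fun k => z k _)); apply: eq_bigr => k _; rewrite mxE.
  have e3 : \sum_(k < m | k != i) \sum_(l < n | l != j) Z k l =
     \sum_(k < m | k != (s^-1)%g i) \sum_(l < n | l != (t^-1)%g j) z k l.
    rewrite -(rk (fun k => \sum_(l < n | l != (t^-1)%g j) z k l)).
    apply: eq_bigr => k _; rewrite -rl; apply: eq_bigr => l _; rewrite mxE.
    done.
  by rewrite -/Z e1 e2 e3 mxE.
Qed.
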